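(* Let $\kappa:\mathbb{R}^d\times\mathbb{R}^d\to\mathbb{R}$ be a kernel with reproducing kernel Hilbert space $\mathcal{H}_\kappa$, and assume $\kappa(\mathbf{x},\mathbf{x})=1$ for all $\mathbf{x}$. Let $(\mathbf{x}_1,y_1),\ldots,(\mathbf{x}_T,y_T)$ be a sequence of examples with $\mathbf{x}_t\in\mathbb{R}^d$ and $y_t\in\{-1,+1\}$, and let $\ell_t(f)=\max(0,1-y_tf(\mathbf{x}_t))$ be the hinge loss, assumed $1$-Lipschitz with respect to $\|\cdot\|_{\mathcal{H}_\kappa}$. Let $f_*\in\arg\min_{f\in\mathcal{H}_\kappa}\sum_{t=1}^T\ell_t(f)$. Let $\beta\ge\alpha>0$ and $\eta>0$, and let $f_1,\ldots,f_T$ be generated by the SPA (Sparse Passive Aggressive) update described in the context. Then $$\mathbb{E}\Big[\sum_{t=1}^T\big(\ell_t(f_t)-\ell_t(f_* )\big)\Big]<\frac{1}{2\eta}\|f_*\|^2_{\mathcal{H}_\kappa}+\frac{\eta\beta}{\min(\alpha,\sqrt{\beta\eta})}\,T .$$ Moreover, if $\eta=\|f_*\|_{\mathcal{H}_\kappa}\sqrt{\frac{\alpha}{2\beta T}}$ and $\alpha^3\le\frac{\beta}{2T}\|f_*\|^2_{\mathcal{H}_\kappa}$, then $$\mathbb{E}\Big[\sum_{t=1}^T\big(\ell_t(f_t)-\ell_t(f_* )\big)\Big]<\|f_*\|_{\mathcal{H}_\kappa}\sqrt{2\beta T/\alpha}.$$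
   Context: SPA update (single kernel): start with $f_1=0\in\mathcal{H}_\kappa$. At each round $t=1,\ldots,T$, compute $\rho_t=\min(\alpha,\ell_t(f_t))/\beta$ and draw a random variable $Z_t\in\{0,1\}$ with $\Pr(Z_t=1\mid Z_1,\ldots,Z_{t-1})=\rho_t$. Then set $$f_{t+1}=\arg\min_{f\in\mathcal{H}_\kappa}\ \frac12\|f-f_t\|^2_{\mathcal{H}_\kappa}+\frac{Z_t}{\rho_t}\,\eta\,\ell_t(f),$$ with the convention $Z_t/\rho_t=0$ when $\rho_t=0$. Equivalently, $f_{t+1}=f_t+\tau_ty_t\kappa(\mathbf{x}_t,\cdot)$ with $\tau_t=\min\big(\eta Z_t/\rho_t,\ \ell_t(f_t)/\kappa(\mathbf{x}_t,\mathbf{x}_t)\big)$. The expectation is over the random variables $Z_1,\ldots,Z_T$. *)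

(* Defs.v *)
From HB Require Import structures.
From mathcomp Require Import all_boot all_order all_algebra.
From mathcomp Require Import reals.
Set Implicit Arguments. Unset Strict Implicit. Unset Printing Implicit Defensive.
Import Order.TTheory GRing.Theory Num.Theory.
Local Open Scope ring_scope.

Section SPA.
Variables (R : realType) (d : nat) (H : lmodType R).

Definition is_inner_product (ip : H -> H -> R) : Prop :=
  (forall f g, ip f g = ip g f) /\
  (forall a f g h, ip (a *: f + g) h = a * ip f h + ip g h) /\
  (forall f, 0 <= ip f f) /\
  (forall f, ip f f = 0 -> f = 0).

Definition hnorm (ip : H -> H -> R) (f : H) : R := Num.sqrt (ip f f).

Definition hcomplete (ip : H -> H -> R) : Prop :=
  forall u : nat -> H,
    (forall e, 0 < e -> exists N, forall m n, (N <= m)%N -> (N <= n)%N ->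
        hnorm ip (u m - u n) < e) ->
    exists l, forall e, 0 < e -> exists N, forall n, (N <= n)%N ->
        hnorm ip (u n - l) < e.

(* Elements of H are functions R^d -> R via the
   injective linear evaluation map ev; kx x is the element kappa(x, .) of H,
   and the reproducing property f(x) = <f, kappa(x,.)> holds. *)
Definition is_RKHS (kappa : 'rV[R]_d -> 'rV[R]_d -> R) (ip : H -> H -> R)
    (ev : H -> 'rV[R]_d -> R) (kx : 'rV[R]_d -> H) : Prop :=
  is_inner_product ip /\ hcomplete ip /\
  injective ev /\
  (forall a f g u, ev (a *: f + g) u = a * ev f u + ev g u) /\
  (forall u v, ev (kx u) v = kappa u v) /\
  (forall f u, ev f u = ip f (kx u)).

Variables (kappa : 'rV[R]_d -> 'rV[R]_d -> R) (ev : H -> 'rV[R]_d -> R)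
  (kx : 'rV[R]_d -> H) (x : nat -> 'rV[R]_d) (y : nat -> R).

(* Hinge loss of round t (rounds are indexed 0 .. T-1). *)
Definition hinge (t : nat) (f : H) : R := Num.max 0 (1 - y t * ev f (x t)).

Variables (alpha beta eta : R).

(* SPA iterates f_t (f_0 = 0), as a function of the coin flips z. *)
Fixpoint spa_f (z : nat -> bool) (t : nat) : H :=
  match t with
  | 0 => 0
  | t'.+1 =>
    let ft := spa_f z t' in
    let l := hinge t' ft in
    let rho := Num.min alpha l / beta in
    let zr := if rho == 0 then 0 else (z t')%:R / rho in
    let tau := Num.min (eta * zr) (l / kappa (x t') (x t')) in
    ft + (tau * y t') *: kx (x t')
  end.

(* Sampling probability rho_t (depends on z_0 .. z_{t-1} only). *)
Definition spa_rho (z : nat -> bool) (t : nat) : R :=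
  Num.min alpha (hinge t (spa_f z t)) / beta.

(* Probability of the coin-flip outcome z = (Z_0, ..., Z_{T-1}):
   Pr(Z_t = 1 | Z_0..Z_{t-1}) = rho_t. *)
Definition spa_prob (T : nat) (z : T.-tuple bool) : R :=
  \prod_(t < T) (if nth false z t then spa_rho (nth false z) t
                 else 1 - spa_rho (nth false z) t).

Definition spa_regret (T : nat) (g : H) (z : nat -> bool) : R :=
  \sum_(t < T) (hinge t (spa_f z t) - hinge t g).

Definition spa_expected_regret (T : nat) (g : H) : R :=
  \sum_(z : T.-tuple bool) spa_prob z * spa_regret T g (nth false z).

End SPA.

(* Main.v *)
Require Import Defs.
From HB Require Import structures.
From mathcomp Require Import all_boot all_order all_algebra.
From mathcomp Require Import reals.
From mathcomp Require Import ring lra.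
Import Order.TTheory GRing.Theory Num.Theory.
Local Open Scope ring_scope.
Set Implicit Arguments. Unset Strict Implicit.
Lemma core_ineq (R : realType) (c u v : R) :
  0 <= c -> 0 < 1 - u ->
  c * ((1 - u) - Num.max 0 (1 - v)) <=
  Num.min c (1 - u) * (v - u + c - Num.min c (1 - u)).
Proof.
move=> c0 lu.
have [hv|hv] := leP 0 (1 - v); have [hm|hm] := leP c (1 - u); nra.
Qed.

Lemma min_sqrt (R : realType) (A l : R) : 0 < A -> 0 < l ->
  Num.min (A / l) l <= Num.sqrt A.
Proof.
move=> A0 l0.
have s0 : 0 < Num.sqrt A by rewrite sqrtr_gt0.
have sA : Num.sqrt A ^+ 2 = A by rewrite sqr_sqrtr // ltW.
have [h|h] := leP l (Num.sqrt A).
- by rewrite ge_min h orbT.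
- rewrite ge_min; apply/orP; left.
  rewrite ler_pdivrMr //. nra.
Qed.
Lemma fin_ineq (R: realType) (eta l ls r tau yy p q c D BB : R) : yy ^+ 2 = 1 -> r * c = eta -> eta * tau <= BB ->
  eta * (l - ls) <= r * (tau * (yy * q - yy * p + c - tau)) ->
  eta * (l - ls) + r * ((D + 2 * (tau * yy) * (p - q) + (tau * yy) ^+ 2 * 1) / 2) + (1 - r) * (D / 2)
  <= D / 2 + BB - r * tau ^+ 2 / 2.
Proof.
move=> y2 rc tb k.
have e : eta * (l - ls) + r * ((D + 2 * (tau * yy) * (p - q) + (tau * yy) ^+ 2 * 1) / 2) + (1 - r) * (D / 2) = eta * (l - ls) - r * (tau * (yy * q - yy * p + c - tau)) + eta * tau + D / 2 - r * tau ^+ 2 / 2 + (r * c - eta) * tau + r * tau^+2 * (yy ^+ 2 - 1) / 2.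
  by field.
rewrite e rc y2 !subrr mul0r mulr0 mul0r !addr0.
lra.
Qed.
Lemma sum_rcons (R : realType) n (G : n.+1.-tuple bool -> R) :
  \sum_(z : n.+1.-tuple bool) G z =
  \sum_(w : n.-tuple bool) (G [tuple of rcons w true] + G [tuple of rcons w false]).
Proof.
pose h (p : n.-tuple bool * bool) : n.+1.-tuple bool := [tuple of rcons p.1 p.2].
pose g (z : n.+1.-tuple bool) : n.-tuple bool * bool :=
  ([tuple of belast (thead z) (behead z)], last (thead z) (behead z)).
have hg : cancel g h.
  move=> z; apply: val_inj => /=; rewrite -lastI.
  by rewrite [in RHS](tuple_eta z).
have gh : cancel h g.
  move=> [w b]; have e := congr1 val (hg (h (w, b))).
  rewrite /= in e; case: (rcons_inj e) => e1 e2.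
  rewrite /g; congr pair; last by [].
  by apply: val_inj.
rewrite (reindex h) /=; last by exists g => ? _.
have -> : \sum_(w : n.-tuple bool) (G [tuple of rcons w true] + G [tuple of rcons w false])
  = \sum_(w : n.-tuple bool) \sum_(b : bool) G (h (w, b)).
  by apply: eq_bigr => w _; rewrite big_bool.
rewrite pair_big /=; apply: eq_bigr => -[w b] _ //.
Qed.
Lemma sq_le (R : realType) (a b : R) : 0 <= b -> a ^+ 2 <= b ^+ 2 -> a <= b.
Proof. move=> b0 h; rewrite leNgt; apply/negP => ab; nra. Qed.

Lemma alg2 (R : realType) (N s beta Tr a : R) : N != 0 -> s != 0 -> beta != 0 -> Tr != 0 ->
  a = s ^+ 2 * (2 * beta * Tr) ->
  N ^+ 2 / (2 * (N * s)) + N * s * beta / a * Tr = N * s^-1.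
Proof.
move=> N0 s0 b0 T0 ->; field.
by rewrite N0 s0 b0 T0.
Qed.

Lemma part2 (R : realType) (N alpha beta eta Tr : R) : 0 < alpha -> 0 < beta -> 0 < Tr ->
  0 < eta -> 0 <= N ->
  eta = N * Num.sqrt (alpha / (2 * beta * Tr)) ->
  alpha ^+ 3 <= beta / (2 * Tr) * N ^+ 2 ->
  N ^+ 2 / (2 * eta) + eta * beta / Num.min alpha (Num.sqrt (beta * eta)) * Tr
   = N * Num.sqrt (2 * beta * Tr / alpha).
Proof.
move=> a0 b0 T0 e0 N0 ee h3.
have q0 : 0 < alpha / (2 * beta * Tr) by rewrite divr_gt0 // !mulr_gt0.
set s := Num.sqrt (alpha / (2 * beta * Tr)) in ee *.
have s0 : 0 < s by rewrite sqrtr_gt0.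
have s2 : s ^+ 2 = alpha / (2 * beta * Tr) by rewrite sqr_sqrtr // ltW.
have Np : 0 < N.
  rewrite lt_def N0 andbT; apply/negP => /eqP N00.
  by move: e0; rewrite ee N00 mul0r ltxx.
have SE : Num.sqrt (2 * beta * Tr / alpha) = s^-1.
  by rewrite -sqrtrV ?ltW // invf_div.
have ae : alpha = s ^+ 2 * (2 * beta * Tr).
  by rewrite s2 divfK // gt_eqF // !mulr_gt0.
have mE : Num.min alpha (Num.sqrt (beta * eta)) = alpha.
  apply: min_l; apply: sq_le; first exact: sqrtr_ge0.
  rewrite sqr_sqrtr; last by rewrite mulr_ge0 // ltW.
  apply: (@sq_le _ (alpha ^+ 2) (beta * eta)); first by rewrite mulr_ge0 ?ltW.
  rewrite ee.
  have -> : (beta * (N * s)) ^+ 2 = beta ^+ 2 * N ^+ 2 * s ^+ 2 by rewrite !exprMn mulrA.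
  rewrite s2 -exprM.
  have -> : beta ^+ 2 * N ^+ 2 * (alpha / (2 * beta * Tr)) = alpha * (beta / (2 * Tr) * N ^+ 2).
    by field; rewrite gt_eqF // gt_eqF.
  have -> : alpha ^+ (2 * 2) = alpha * alpha ^+ 3 by rewrite -exprS.
  by rewrite ler_pM2l.
rewrite mE SE ee.
apply: alg2 => //; by rewrite gt_eqF.
Qed.

Section Main.
Variables (R : realType) (d : nat) (kappa : 'rV[R]_d -> 'rV[R]_d -> R)
    (H : lmodType R) (ip : H -> H -> R) (ev : H -> 'rV[R]_d -> R)
    (kx : 'rV[R]_d -> H) (T : nat) (x : nat -> 'rV[R]_d) (y : nat -> R)
    (fstar : H) (alpha beta eta : R).
Hypotheses (hR : is_RKHS kappa ip ev kx) (hk : forall u, kappa u u = 1)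
  (hy : forall t, (t < T)%N -> y t = 1 \/ y t = -1)
  (ha : 0 < alpha) (hab : alpha <= beta) (he : 0 < eta).

Local Notation F := (spa_f kappa ev kx x y alpha beta eta).
Local Notation hg := (hinge ev x y).
Definition Dst z t := ip (F z t - fstar) (F z t - fstar).
Definition rr z t := Num.min alpha (hg t (F z t)) / beta.
Definition taut z t := Num.min (eta * (if rr z t == 0 then 0 else 1 / rr z t)) (hg t (F z t)).
Definition mm := Num.min alpha (Num.sqrt (beta * eta)).
Definition BB := eta * (eta * beta / mm).

Lemma F_S z t : F z t.+1 = F z t + (Num.min (eta * (if rr z t == 0 then 0 else (z t)%:R / rr z t)) (hg t (F z t) / kappa (x t) (x t)) * y t) *: kx (x t).
Proof. by []. Qed.

Lemma F_prefix z z' t : (forall i, (i < t)%N -> z i = z' i) -> F z t = F z' t.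
Proof.
elim: t => [|t IH] Hz //.
rewrite !F_S /rr IH ?Hz // => i lt; apply: Hz; exact: ltnW.
Qed.

Lemma rr_prefix z z' t : (forall i, (i < t)%N -> z i = z' i) -> rr z t = rr z' t.
Proof. by move=> Hz; rewrite /rr (F_prefix Hz). Qed.

Lemma taut_prefix z z' t : (forall i, (i < t)%N -> z i = z' i) -> taut z t = taut z' t.
Proof. by move=> Hz; rewrite /taut (rr_prefix Hz) (F_prefix Hz). Qed.

Lemma hg_ge0 t f : 0 <= hg t f.
Proof. by rewrite /hinge le_max lexx. Qed.

Lemma beta_gt0 : 0 < beta. Proof. exact: lt_le_trans hab. Qed.

Lemma rr_ge0 z t : 0 <= rr z t.
Proof. rewrite /rr divr_ge0 ?(ltW beta_gt0) // le_min (ltW ha) hg_ge0 //. Qed.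

Lemma rr_le1 z t : rr z t <= 1.
Proof.
rewrite /rr ler_pdivrMr ?beta_gt0 // mul1r.
apply: le_trans hab; rewrite ge_min lexx //.
Qed.

Lemma mm_gt0 : 0 < mm.
Proof.
rewrite /mm lt_min ha sqrtr_gt0 mulr_gt0 ?beta_gt0 //.
Qed.

Lemma BB_ge0 : 0 <= BB.
Proof. rewrite /BB mulr_ge0 ?(ltW he) // divr_ge0 ?(ltW mm_gt0) // mulr_ge0 ?(ltW he) ?(ltW beta_gt0) //. Qed.

Lemma ip_sym f g : ip f g = ip g f.
Proof. by case: hR => [[e _]] _. Qed.
Lemma ip_lin a f g h : ip (a *: f + g) h = a * ip f h + ip g h.
Proof. by case: hR => [[_ [e _]]] _. Qed.
Lemma ip_ge0 f : 0 <= ip f f.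
Proof. by case: hR => [[_ [_ [e _]]]] _. Qed.
Lemma ev_ip f u : ev f u = ip f (kx u).
Proof. by case: hR => _ [_ [_ [_ [_ h]]]]. Qed.
Lemma ev_kx u v : ev (kx u) v = kappa u v.
Proof. by case: hR => _ [_ [_ [_ [h _]]]]. Qed.
Lemma ip0 h : ip 0 h = 0.
Proof.
have := ip_lin 1 0 0 h; rewrite scaler0 addr0 mul1r => e.
by apply/eqP; rewrite -(addrI (ip 0 h) (etrans (addr0 _) e)).
Qed.
Lemma ipD f g h : ip (f + g) h = ip f h + ip g h.
Proof. by rewrite -[f]scale1r ip_lin mul1r scale1r. Qed.
Lemma ipZ a f h : ip (a *: f) h = a * ip f h.
Proof. by rewrite -[a *: f]addr0 ip_lin ip0 addr0. Qed.
Lemma ipN f h : ip (- f) h = - ip f h.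
Proof. by rewrite -scaleN1r ipZ mulN1r. Qed.
Lemma ipB f g h : ip (f - g) h = ip f h - ip g h.
Proof. by rewrite ipD ipN. Qed.

Lemma ip_expand g a k :
  ip (g + a *: k) (g + a *: k) = ip g g + 2 * a * ip g k + a ^+ 2 * ip k k.
Proof.
rewrite ipD ipZ ![ip g _]ip_sym ![ip k _]ip_sym ipD ipZ ipD ipZ (ip_sym k g).
ring.
Qed.

Lemma kk u : ip (kx u) (kx u) = 1.
Proof. by rewrite -ev_ip ev_kx hk. Qed.

Lemma D0 z : Dst z 0 = ip fstar fstar.
Proof. by rewrite /Dst /= add0r ipN ip_sym ipN opprK. Qed.

Lemma tau_bound z t : taut z t <= eta * beta / mm.
Proof.
rewrite /taut /rr.
set l := hg t (F z t).
have l0 : 0 <= l := hg_ge0 t (F z t).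
have b0 := beta_gt0.
have m0 := mm_gt0.
have eb : 0 < eta * beta by rewrite mulr_gt0.
have [lz|lz] := eqVneq l 0.
  rewrite lz (min_r (ltW ha)) mul0r eqxx mulr0 min_l //.
  by rewrite divr_ge0 ?ltW.
have lp : 0 < l by rewrite lt_def lz l0.
have mp : 0 < Num.min alpha l by rewrite lt_min ha lp.
have -> : (Num.min alpha l / beta == 0) = false.
  by apply/negbTE; rewrite mulf_neq0 ?invr_eq0 ?gt_eqF.
have -> : eta * (1 / (Num.min alpha l / beta)) = eta * beta / Num.min alpha l.
  by rewrite div1r invf_div mulrA.
have [la|la] := leP alpha l.
- rewrite ge_min; apply/orP; left.
  rewrite ler_pM2l // lef_pV2 ?posrE //.
  by rewrite /mm ge_min lexx.
- apply: le_trans (min_sqrt eb lp) _.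
  set s := Num.sqrt (eta * beta).
  have s0 : 0 < s by rewrite sqrtr_gt0.
  have ss : s * s = eta * beta by rewrite -expr2 sqr_sqrtr // ltW.
  have ms : mm <= s by rewrite /mm mulrC ge_min lexx orbT.
  rewrite ler_pdivlMr //; nra.
Qed.

Lemma ev0 u : ev 0 u = 0.
Proof. by rewrite ev_ip ip0. Qed.
Lemma evB f g u : ev (f - g) u = ev f u - ev g u.
Proof. by rewrite !ev_ip ipB. Qed.

Lemma step z z1 z0 t : (t < T)%N ->
  (forall i, (i < t)%N -> z1 i = z i) -> (forall i, (i < t)%N -> z0 i = z i) ->
  z1 t = true -> z0 t = false ->
  eta * (hg t (F z t) - hg t fstar) + rr z t * (Dst z1 t.+1 / 2)
    + (1 - rr z t) * (Dst z0 t.+1 / 2)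
  <= Dst z t / 2 + BB - rr z t * taut z t ^+ 2 / 2.
Proof.
move=> tT H1 H0 H1t H0t.
have e1 : F z1 t = F z t := F_prefix H1.
have e0 : F z0 t = F z t := F_prefix H0.
have r1 : rr z1 t = rr z t := rr_prefix H1.
have r0 : rr z0 t = rr z t := rr_prefix H0.
have E0 : F z0 t.+1 = F z t.
  rewrite F_S e0 r0 H0t hk divr1 /= mul0r if_same mulr0 min_l ?hg_ge0 //.
  by rewrite mul0r scale0r addr0.
have E1 : F z1 t.+1 = F z t + (taut z t * y t) *: kx (x t).
  by rewrite F_S e1 r1 H1t hk divr1.
rewrite /Dst E0 E1 (addrAC (F z t) _ (- fstar)) ip_expand kk -ev_ip evB.
have y2 : y t ^+ 2 = 1 by case: (hy tT) => ->; rewrite ?sqrrN expr1n.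
have tb := tau_bound z t.
have tb' : eta * taut z t <= BB by rewrite /BB ler_pM2l.
have rg := rr_ge0 z t.
move: (hg_ge0 t (F z t)) => lg0.
have [rz|rnz] := eqVneq (rr z t) 0.
  have lz : hg t (F z t) = 0.
    move: rz; rewrite /rr => /eqP; rewrite mulf_eq0 invr_eq0 (gt_eqF beta_gt0) orbF.
    have [l0|l0] := leP alpha (hg t (F z t)); first by rewrite (gt_eqF ha).
    by move/eqP.
  rewrite rz lz mul0r subr0 mul1r.
  have := mulr_ge0 (ltW he) (hg_ge0 t fstar); have := BB_ge0; lra.
have rp : 0 < rr z t by rewrite lt_def rnz.
set r : R := rr z t.
have lp : 0 < hg t (F z t).
  move: rp; rewrite /r /rr pmulr_lgt0 ?invr_gt0 ?beta_gt0 //.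
  by rewrite lt_min => /andP [].
have lE : hg t (F z t) = 1 - y t * ev (F z t) (x t).
  move: lp; rewrite /hinge.
  by have [h|h] := leP 0 (1 - y t * ev (F z t) (x t)); rewrite ?ltxx.
have tE : taut z t = Num.min (eta / r) (1 - y t * ev (F z t) (x t)).
  by rewrite /taut -/r (negbTE rnz) mulrA mulr1 lE.
have c0 : 0 <= eta / r by rewrite divr_ge0 // ltW.
have lp' := lp; rewrite lE in lp'.
have key := core_ineq (y t * ev fstar (x t)) c0 lp'.
have lsE : hg t fstar = Num.max 0 (1 - y t * ev fstar (x t)) by [].
rewrite -tE -lsE -lE in key.
have rc : r * (eta / r) = eta by rewrite mulrCA divff ?mulr1.
have key2 := ler_wpM2l (ltW rp) key.
rewrite mulrA rc in key2.
set tau := taut z t in tb' key2 *.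
set l := hg t (F z t) in key2 *.
set ls := hg t fstar in key2 *.
set p := ev (F z t) (x t) in key2 *.
set q := ev fstar (x t) in key2 *.
set c := eta / r in key2 rc *.
set D := ip (F z t - fstar) (F z t - fstar).
set yy := y t in y2 key2 *.
exact: fin_ineq y2 rc tb' key2.
Qed.

Local Notation P := (spa_prob kappa ev kx x y alpha beta eta).

Lemma nth_rc_lt n (w : n.-tuple bool) b i : (i < n)%N ->
  nth false [tuple of rcons w b] i = nth false w i.
Proof. by move=> h; rewrite /= nth_rcons size_tuple h. Qed.

Lemma nth_rc_eq n (w : n.-tuple bool) b : nth false [tuple of rcons w b] n = b.
Proof. by rewrite /= nth_rcons size_tuple ltnn eqxx. Qed.

Lemma P_rcons n (w : n.-tuple bool) b :
  P [tuple of rcons w b] = P w * (if b then rr (nth false w) n else 1 - rr (nth false w) n).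
Proof.
rewrite /spa_prob big_ord_recr /=; congr (_ * _).
  apply: eq_bigr => i _.
  have hi : forall j, (j < i)%N -> nth false [tuple of rcons w b] j = nth false w j.
    move=> j ji; apply: nth_rc_lt; exact: ltn_trans ji (ltn_ord i).
  rewrite /= nth_rcons size_tuple (ltn_ord i).
  by rewrite /spa_rho -/(rr _ _) (rr_prefix hi).
have hi : forall j, (j < n)%N -> nth false [tuple of rcons w b] j = nth false w j.
  by move=> j ji; apply: nth_rc_lt.
by rewrite /spa_rho -/(rr _ _) (rr_prefix hi) /= nth_rcons size_tuple ltnn eqxx.
Qed.

Lemma P_ge0 n (w : n.-tuple bool) : 0 <= P w.
Proof.
apply: prodr_ge0 => i _; case: ifP => _.
  exact: rr_ge0.
by rewrite subr_ge0 rr_le1.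
Qed.

Lemma sum0 (G : 0.-tuple bool -> R) : \sum_(w : 0.-tuple bool) G w = G [tuple].
Proof. by rewrite (big_pred1 [tuple]) // => w; apply/esym/eqP; exact: tuple0. Qed.

Lemma sumP n : \sum_(w : n.-tuple bool) P w = 1.
Proof.
elim: n => [|n IH]; first by rewrite sum0 /spa_prob big_ord0.
rewrite sum_rcons -[RHS]IH; apply: eq_bigr => w _.
by rewrite !P_rcons; ring.
Qed.

Definition LHS n := \sum_(w : n.-tuple bool) P w *
  (eta * \sum_(t < n) (hg t (F (nth false w) t) - hg t fstar) + Dst (nth false w) n / 2).

Definition slack z t := rr z t * taut z t ^+ 2 / 2.

Lemma slack_ge0 z t : 0 <= slack z t.
Proof. by rewrite /slack divr_ge0 // mulr_ge0 ?rr_ge0 // sqr_ge0. Qed.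

Lemma LHS_step n : (n < T)%N ->
  LHS n.+1 <= LHS n + BB - \sum_(w : n.-tuple bool) P w * slack (nth false w) n.
Proof.
move=> nT.
have -> : LHS n + BB - \sum_(w : n.-tuple bool) P w * slack (nth false w) n =
  \sum_(w : n.-tuple bool) (P w * (eta * \sum_(t < n) (hg t (F (nth false w) t) - hg t fstar)
     + Dst (nth false w) n / 2) + P w * BB - P w * slack (nth false w) n).
  by rewrite sumrB big_split /= -mulr_suml sumP mul1r.
rewrite /LHS sum_rcons; apply: ler_sum => w _.
have pre : forall b j, (j < n)%N -> nth false [tuple of rcons w b] j = nth false w j.
  by move=> b j jn; rewrite /= nth_rcons size_tuple jn.
have Sb : forall b, \sum_(t < n.+1) (hg t (F (nth false [tuple of rcons w b]) t) - hg t fstar)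
   = \sum_(t < n) (hg t (F (nth false w) t) - hg t fstar) + (hg n (F (nth false w) n) - hg n fstar).
  move=> b; rewrite big_ord_recr /=; congr (_ + (hg _ _ - _)).
    apply: eq_bigr => i _; congr (hg _ _ - _); apply: F_prefix => j ji.
    by rewrite nth_rcons size_tuple (ltn_trans ji (ltn_ord i)).
  by apply: F_prefix => j ji; rewrite nth_rcons size_tuple ji.
rewrite !Sb !P_rcons.
have st := @step (nth false w) (nth false [tuple of rcons w true]) (nth false [tuple of rcons w false]) n nT
  (pre true) (pre false) (nth_rc_eq w true) (nth_rc_eq w false).
have Pg := P_ge0 w.
set S := \sum_(t < n) _.
set r := rr (nth false w) n.
set D1 := Dst _ n.+1.
set D0 := Dst (nth false [tuple of rcons w false]) n.+1.
rewrite -/r in st.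
rewrite -/(slack _ _) in st.
set dl := hg n _ - hg n fstar.
set sl := slack _ _.
have e : P w * r * (eta * (S + dl) + D1 / 2) + P w * (1 - r) * (eta * (S + dl) + D0 / 2)
  = P w * (eta * S + (eta * dl + r * (D1 / 2) + (1 - r) * (D0 / 2))) by ring.
rewrite e.
have e2 : P w * (eta * S + Dst (nth false w) n / 2) + P w * BB - P w * sl
  = P w * (eta * S + (Dst (nth false w) n / 2 + BB - sl)) by ring.
rewrite e2; apply: ler_wpM2l => //.
by rewrite lerD2l.
Qed.

Definition s0 := slack (fun _ => false) 0.

Lemma s0_gt0 : 0 < s0.
Proof.
have h1 : hg 0 (F (fun _ => false) 0) = 1.
  by rewrite /= /hinge ev0 mulr0 subr0 max_r // ler01.
have rp : 0 < rr (fun _ => false) 0.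
  by rewrite /rr h1 divr_gt0 ?beta_gt0 // lt_min ha ltr01.
rewrite /s0 /slack divr_gt0 // mulr_gt0 // exprn_gt0 //.
rewrite /taut h1 (gt_eqF rp) lt_min ltr01 andbT mulr_gt0 // div1r invr_gt0 //.
Qed.

Lemma LHS0 : LHS 0 = ip fstar fstar / 2.
Proof. by rewrite /LHS sum0 /spa_prob !big_ord0 mulr0 add0r mul1r D0. Qed.

Lemma claim n : (n < T)%N -> LHS n.+1 <= ip fstar fstar / 2 + n.+1%:R * BB - s0.
Proof.
elim: n => [|n IH] nT.
  apply: le_trans (LHS_step nT) _.
  rewrite LHS0 sum0 /spa_prob big_ord0 mul1r mul1r.
  have -> : slack (nth false [tuple]) 0 = s0.
    by rewrite /s0 /slack /taut /rr (F_prefix (z:=nth false [tuple]) (z':=fun _ => false) (t:=0)).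
  by [].
apply: le_trans (LHS_step nT) _.
have := IH (ltnW nT).
have : 0 <= \sum_(w : n.+1.-tuple bool) P w * slack (nth false w) n.+1.
  by apply: sumr_ge0 => w _; rewrite mulr_ge0 ?P_ge0 ?slack_ge0.
rewrite -[n.+2]addn1 natrD mulrDl mul1r.
lra.
Qed.

Lemma part1 : (0 < T)%N ->
  spa_expected_regret kappa ev kx x y alpha beta eta T fstar
    < hnorm ip fstar ^+ 2 / (2 * eta) + eta * beta / mm * T%:R.
Proof.
move=> T0.
have le1 : eta * spa_expected_regret kappa ev kx x y alpha beta eta T fstar <= LHS T.
  rewrite /LHS /spa_expected_regret mulr_sumr; apply: ler_sum => z _.
  rewrite /spa_regret.
  have : 0 <= P z * (Dst (nth false z) T / 2).
    by rewrite mulr_ge0 ?P_ge0 // divr_ge0 // /Dst ip_ge0.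
  lra.
have le2 : LHS T <= ip fstar fstar / 2 + T%:R * BB - s0.
  have h := @claim T.-1 ltac:(by rewrite ltn_predL).
  by rewrite prednK in h.
have sp := s0_gt0.
have ff : hnorm ip fstar ^+ 2 = ip fstar fstar by rewrite /hnorm sqr_sqrtr ?ip_ge0.
rewrite -(ltr_pM2l he) ff.
have -> : eta * (ip fstar fstar / (2 * eta) + eta * beta / mm * T%:R)
  = ip fstar fstar / 2 + T%:R * BB.
  by rewrite /BB; field; rewrite (gt_eqF mm_gt0) (gt_eqF he).
lra.
Qed.
End Main.

Unset Implicit Arguments.
Unset Strict Implicit.

Theorem lemma1 (R : realType) (d : nat) (kappa : 'rV[R]_d -> 'rV[R]_d -> R)
    (H : lmodType R) (ip : H -> H -> R) (ev : H -> 'rV[R]_d -> R)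
    (kx : 'rV[R]_d -> H) (T : nat) (x : nat -> 'rV[R]_d) (y : nat -> R)
    (fstar : H) (alpha beta eta : R) :
  is_RKHS kappa ip ev kx ->
  (forall u, kappa u u = 1) ->
  (0 < T)%N ->
  (forall t, (t < T)%N -> y t = 1 \/ y t = -1) ->
  (forall t f g, (t < T)%N ->
     `|hinge ev x y t f - hinge ev x y t g| <= hnorm ip (f - g)) ->
  (forall g, \sum_(t < T) hinge ev x y t fstar <= \sum_(t < T) hinge ev x y t g) ->
  0 < alpha -> alpha <= beta -> 0 < eta ->
  spa_expected_regret kappa ev kx x y alpha beta eta T fstar
    < hnorm ip fstar ^+ 2 / (2 * eta)
      + eta * beta / Num.min alpha (Num.sqrt (beta * eta)) * T%:R
  /\
  (eta = hnorm ip fstar * Num.sqrt (alpha / (2 * beta * T%:R)) ->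
   alpha ^+ 3 <= beta / (2 * T%:R) * hnorm ip fstar ^+ 2 ->
   spa_expected_regret kappa ev kx x y alpha beta eta T fstar
     < hnorm ip fstar * Num.sqrt (2 * beta * T%:R / alpha)).
Proof.
move=> hR hk T0 hy _ _ ha hab he.
have p1 : spa_expected_regret kappa ev kx x y alpha beta eta T fstar
    < hnorm ip fstar ^+ 2 / (2 * eta)
      + eta * beta / Num.min alpha (Num.sqrt (beta * eta)) * T%:R.
  exact: (@part1 R d kappa H ip ev kx T x y fstar alpha beta eta hR hk hy ha hab he T0).
split => // ee h3.
have b0 : 0 < beta by apply: lt_le_trans hab.
have Tp : 0 < (T%:R : R) by rewrite ltr0n.
rewrite -(part2 ha b0 Tp he _ ee h3) //.
exact: sqrtr_ge0.
Qed.
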